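(* Consider $\Sigma:\ \dot x=-(A-M)x+d$ and assume $-(A-M)$ is Hurwitz. If $\Sigma$ is $\gamma$-robust for some $\gamma>0$, then for every cycle in the graph $\mathcal{G}(MA^{-1})$, its weight $w$ satisfies $w<1$ and $$\frac{1}{1-w}\le a_i\gamma$$ for every node $i$ belonging to the cycle.
   Context: Fix $N\in\mathbb{N}$. $A=\mathrm{diag}(a_1,\dots,a_N)$ with all $a_i>0$, and $M\in\mathbb{R}^{N\times N}$ has zero diagonal and nonnegative off-diagonal entries $m_{ij}=(M)_{ij}$. For $\gamma>0$, $\Sigma$ is called $\gamma$-robust if $-(A-M)$ is Hurwitz and for every bounded disturbance $d$, the solution with $x(0)=0$ satisfies $\max_{i}|x_i(t)|\le\gamma\max_i\sup_{s\ge0}|d_i(s)|$ for all $t\ge0$. The directed weighted graph $\mathcal{G}(MA^{-1})$ has vertex set $\{1,\dots,N\}$ and an edge $(p,q)$ iff $m_{pq}>0$, with weight $m_{pq}/a_q$. A walk of length $k\ge1$ from $i$ to $j$ is a sequence $(i_0,\dots,i_k)$ with $i_0=i$, $i_k=j$ and $m_{i_{l+1}i_l}>0$ for all $l$; its weight is $\prod_{l=0}^{k-1} m_{i_{l+1}i_l}/a_{i_l}$. A cycle is a walk $(i_0,\dots,i_k)$, $k\ge1$, with $i_0=i_k$ and $i_0,\dots,i_{k-1}$ pairwise distinct; its nodes are $i_0,\dots,i_{k-1}$. *)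

(* Defs.v *)
From HB Require Import structures.
From mathcomp Require Import all_boot all_order all_algebra.
From mathcomp Require Import all_classical all_reals all_analysis.
From mathcomp.real_closed Require Import complex.
Set Implicit Arguments. Unset Strict Implicit. Unset Printing Implicit Defensive.
Import Order.TTheory GRing.Theory Num.Theory.
Import numFieldNormedType.Exports.
Local Open Scope classical_set_scope.
Local Open Scope ring_scope.


Section Defs.
Variables (R : realType) (N : nat).

Definition Amat (a : 'I_N -> R) : 'M[R]_N := diag_mx (\row_i a i).

Definition sysmat (a : 'I_N -> R) (M : 'M[R]_N) : 'M[R]_N := - (Amat a - M).

Definition hurwitz (B : 'M[R]_N) : Prop :=
  forall z : R[i], eigenvalue (map_mx (fun r : R => (r%:C)%C) B) z -> Re z < 0.

(* x : [0,oo) -> R^N (component x t i) is the solution of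
   x' = -(A - M) x + d with x(0) = 0: continuous on [0,oo),
   differentiable with the prescribed derivative at every t > 0. *)
Definition is_solution (a : 'I_N -> R) (M : 'M[R]_N)
    (d : R -> 'I_N -> R) (x : R -> 'I_N -> R) : Prop :=
  (forall i, x 0 i = 0) /\
  (forall i, {within `[0, +oo[, continuous (fun s => x s i)}) /\
  (forall t : R, 0 < t -> forall i : 'I_N,
     is_derive t (1 : R) (fun s : R => x s i)
       (\sum_j sysmat a M i j * x t j + d t i)).

Definition disturbance (d : R -> 'I_N -> R) : Prop :=
  forall i, {within `[0, +oo[, continuous (fun s => d s i)}.

(* K bounds max_i sup_{s >= 0} |d_i(s)| *)
Definition dist_bound (d : R -> 'I_N -> R) (K : R) : Prop :=
  forall i s, 0 <= s -> `|d s i| <= K.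

Definition gamma_robust (a : 'I_N -> R) (M : 'M[R]_N) (gamma : R) : Prop :=
  hurwitz (sysmat a M) /\
  forall d x, disturbance d -> (exists K, dist_bound d K) ->
    is_solution a M d x ->
    forall K, dist_bound d K ->
    forall t, 0 <= t -> forall i, `|x t i| <= gamma * K.

Definition walk_rel (M : 'M[R]_N) : rel 'I_N := fun p q => 0 < M q p.

(* a cycle (i_0, ..., i_{k-1}, i_0), k >= 1, nodes pairwise distinct,
   represented by the list of its nodes [:: i_0; ...; i_{k-1}] *)
Definition is_cycle (M : 'M[R]_N) (c : seq 'I_N) : bool :=
  [&& c != [::], uniq c & path.cycle (walk_rel M) c].

(* weight: prod_l m_{i_{l+1} i_l} / a_{i_l}, indices mod k *)
Definition cycle_weight (a : 'I_N -> R) (M : 'M[R]_N) (c : seq 'I_N) : R :=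
  \prod_(pq <- zip c (rot 1 c)) (M pq.2 pq.1 / a pq.1).

End Defs.

(* Main.v *)
Require Import Defs.
From HB Require Import structures.
From mathcomp Require Import all_boot all_order all_algebra.
From mathcomp Require Import all_classical all_reals all_analysis.
From mathcomp.real_closed Require Import complex.
From mathcomp Require Import ring lra.
Import Order.TTheory GRing.Theory Num.Theory.
Import numFieldNormedType.Exports.
Local Open Scope ring_scope.

Lemma phi_derive (R : realType) (T s : R) : T + s != 0 ->
  is_derive s (1:R) (fun y : R => y * (T + y)^-1) (T * ((T + s)^-1 * (T + s)^-1)).
Proof.
move=> hs.
have h1 : is_derive s (1:R) (fun y : R => T + y) 1.
  have := @is_deriveD R R R (cst T) id s 1 0 1 _ _.
  by rewrite add0r; move=> h; exact: h.
have h2 := is_deriveV hs h1.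
have h3 : is_derive s (1:R) (fun y : R => y) 1 by exact: is_derive_id.
have h4 := is_deriveM h3 h2.
apply: is_derive_eq.
have E : forall k : R, k%:A = k by move=> k; rewrite /GRing.scale /= mulr1.
rewrite !E /GRing.scale /=.
by field.
Qed.
Lemma derivable_d (R : realType) (T c1 c2 s : R) : T + s != 0 ->
  derivable (fun y : R => T * ((T + y)^-1 * (T + y)^-1) * c1 + y * (T + y)^-1 * c2) s 1.
Proof.
move=> hs.
have h1 : derivable (fun y : R => T + y) s 1.
  apply: derivableD; [exact: derivable_cst | exact: derivable_id].
have h2 : derivable (fun y : R => (T + y)^-1) s 1 by exact: derivableV.
apply: derivableD.
  apply: derivableM; last exact: derivable_cst.
  apply: derivableM; first exact: derivable_cst.
  exact: derivableM.
apply: derivableM; last exact: derivable_cst.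
apply: derivableM => //; exact: derivable_id.
Qed.

Local Open Scope classical_set_scope.
Lemma cont0 (R : realType) (f : R -> R) : (forall s : R, 0 <= s -> derivable f s 1) ->
  {within `[0, +oo[%classic, continuous f}.
Proof.
move=> h; apply: (@derivable_within_continuous R R f `[0, +oo[%R).
move=> s hs; apply: h; move: hs; rewrite in_itv /= andbT; done.
Qed.

Local Close Scope classical_set_scope.
Lemma frac_bounds (R : realType) (T s : R) : 0 < T -> 0 <= s ->
  0 <= s * (T + s)^-1 <= 1 /\ 0 <= T * ((T + s)^-1 * (T + s)^-1) <= T^-1.
Proof.
move=> hT hs.
have hTs : 0 < T + s by lra.
set y := (T + s)^-1.
have hy : 0 < y by rewrite invr_gt0.
have hy1 : (T + s) * y = 1 by rewrite mulfV // gt_eqF.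
set w := T^-1.
have hw1 : T * w = 1 by rewrite mulfV // gt_eqF.
have hw : 0 < w by rewrite invr_gt0.
have e2 : T * ((T + s)^-1 * (T + s)^-1) = T * y * y by rewrite /y mulrA.
rewrite e2.
have Ty : T * y <= 1 by nra.
have yw : y <= w by nra.
split; apply/andP; split; nra.
Qed.

Lemma static_key (R : realType) N (a : 'I_N -> R) (M : 'M[R]_N) gamma
  (hrob : gamma_robust a M gamma) (v : 'I_N -> R) (U : R)
  (hU : forall j, `|\sum_q sysmat a M j q * v q| <= U) (T t : R) (i : 'I_N) :
  0 < T -> 0 <= t ->
  `|t * (T + t)^-1 * v i| <= gamma * (T^-1 * \sum_j `|v j| + U).
Proof.
move=> hT ht.
set V := \sum_j `|v j|.
set u := fun j => - (\sum_q sysmat a M j q * v q).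
pose x := fun (s : R) (j : 'I_N) => s * (T + s)^-1 * v j.
pose d := fun (s : R) (j : 'I_N) => T * ((T + s)^-1 * (T + s)^-1) * v j + s * (T + s)^-1 * u j.
have [_ rob] := hrob.
have hK : dist_bound d (T^-1 * V + U).
  move=> j s hs; rewrite /d.
  have [/andP[f1 f2] /andP[g1 g2]] := @frac_bounds R T s hT hs.
  apply: (le_trans (ler_normD _ _)).
  rewrite (normrM _ (v j)) (normrM _ (u j)) (ger0_norm f1) (ger0_norm g1).
  have vj : `|v j| <= V.
    rewrite /V (bigD1 j) //=; rewrite lerDl; apply: sumr_ge0 => k _; exact: normr_ge0.
  have uj : `|u j| <= U by rewrite /u normrN; exact: hU.
  apply: lerD.
    apply: (le_trans (ler_wpM2r (normr_ge0 _) g2)).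
    apply: ler_wpM2l => //; rewrite invr_ge0; exact: ltW.
  apply: (le_trans (ler_wpM2r (normr_ge0 _) f2)); rewrite mul1r; exact: uj.
have hsol : is_solution a M d x.
  split; first by move=> j; rewrite /x !mul0r.
  split.
    move=> j; apply: cont0 => s hs.
    apply: derivableM; last exact: derivable_cst.
    apply: derivableM; first exact: derivable_id.
    apply: derivableV; last first.
      apply: derivableD; [exact: derivable_cst | exact: derivable_id].
    rewrite gt_eqF //; lra.
  move=> s hs j.
  have hTs : T + s != 0 by rewrite gt_eqF //; lra.
  have h1 := @phi_derive R T s hTs.
  have h2 := @is_derive_cst R R R (v j) s 1.
  have h3 := is_deriveM h1 h2.
  apply: is_derive_eq.
  rewrite /d /u /x.
  under eq_bigr do rewrite mulrCA.
  rewrite -mulr_sumr.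
  have E : forall k : R, k%:A = k by move=> k; rewrite /GRing.scale /= mulr1.
  rewrite /GRing.scale /= mulr0 add0r.
  ring.
have hd : disturbance d.
  move=> j; apply: cont0 => s hs; rewrite /d.
  apply: derivable_d; rewrite gt_eqF //; lra.
exact: (rob d x hd (ex_intro _ _ hK) hsol _ hK t ht i).
Qed.

Lemma static_bound (R : realType) N (a : 'I_N -> R) (M : 'M[R]_N) gamma
  (hg : 0 < gamma) (hrob : gamma_robust a M gamma) (v : 'I_N -> R) (U : R)
  (hU : forall j, `|\sum_q sysmat a M j q * v q| <= U) (i : 'I_N) :
  `|v i| <= gamma * U.
Proof.
set V := \sum_j `|v j|.
have V0 : 0 <= V by apply: sumr_ge0 => k _; exact: normr_ge0.
have U0 : 0 <= U by apply: le_trans (hU i); exact: normr_ge0.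
set P := `|v i|.
have P0 : 0 <= P by exact: normr_ge0.
have key : forall T, 0 < T -> T * T * P <= gamma * V * (1 + T) + gamma * U * (T * (1 + T)).
  move=> T hT.
  have := @static_key R N a M gamma hrob v U hU T (T * T) i hT (mulr_ge0 (ltW hT) (ltW hT)).
  rewrite -/V normrM ger0_norm; last first.
    apply: mulr_ge0; first by apply: mulr_ge0; exact: ltW.
    rewrite invr_ge0; nra.
  move=> h.
  have hp : 0 <= T * (1 + T) by nra.
  have h' := ler_wpM2r hp h.
  have e1 : T * T * (T + T * T)^-1 * P * (T * (1 + T)) = T * T * P.
    have hz : T + T * T != 0 by rewrite gt_eqF //; nra.
    field; exact: hz.
  have e2 : gamma * (T^-1 * V + U) * (T * (1 + T)) = gamma * V * (1 + T) + gamma * U * (T * (1 + T)).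
    have hz2 : T != 0 by rewrite gt_eqF.
    field; exact: hz2.
  by rewrite -e1 -e2.
rewrite leNgt; apply/negP => hlt.
set e := P - gamma * U.
have he : 0 < e by rewrite /e subr_gt0.
set C := 2 * gamma * V + gamma * U.
have C0 : 0 <= C by rewrite /C; nra.
set T := C / e + 1.
have hT1 : 1 <= T by rewrite /T lerDr divr_ge0 // ltW.
have hTe : T * e = C + e by rewrite /T; field; rewrite gt_eqF.
have := key T ltac:(lra).
have gV : 0 <= gamma * V by nra.
have gU : 0 <= gamma * U by nra.
have eP : P = e + gamma * U by rewrite /e; ring.
rewrite eP => hk.
have k1 : T * (T * e) = T * (C + e) by rewrite hTe.
have k2 : gamma * V <= T * (gamma * V) by nra.
rewrite /C in k1.
nra.
Qed.
Lemma unit_Gm (R : realType) N (a : 'I_N -> R) (M : 'M[R]_N) (mu : R) :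
  0 <= mu -> hurwitz (sysmat a M) -> (mu%:M - sysmat a M) \in unitmx.
Proof.
move=> hmu hH.
apply/negPn/negP => hnu.
have hev : eigenvalue (map_mx (fun r : R => (r%:C)%C) (sysmat a M)) ((mu%:C)%C).
  rewrite /eigenvalue /eigenspace kermx_eq0 row_free_unit.
  change (map_mx (fun r : R => (r%:C)%C) (sysmat a M)) with (map_mx (real_complex R) (sysmat a M)).
  rewrite -(map_scalar_mx (real_complex R)) -map_mxB map_unitmx.
  have -> : sysmat a M - mu%:M = (-1) *: (mu%:M - sysmat a M).
    by rewrite scaleN1r opprB.
  by rewrite unitmxZ ?unitrN1.
have := hH _ hev.

have hr : (mu%:C)%C \is Num.real by rewrite -complexr0 complex_real.
rewrite (Creal_ReP _ hr) ltcE /= ltNge hmu andbF.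
done.
Qed.
Lemma drop_zip' (T1 T2 : Type) n (s : seq T1) (t : seq T2) :
  drop n (zip s t) = zip (drop n s) (drop n t).
Proof.
have z0 : forall (u : seq T1), zip u ([::] : seq T2) = [::] by case.
elim: s t n => [|x s IH] [|y t] [|n] //=; rewrite ?z0 //. all: match goal with |- context[drop ?n ?s] => by case: (drop n s) end.
Qed.

Lemma take_zip' (T1 T2 : Type) n (s : seq T1) (t : seq T2) :
  take n (zip s t) = zip (take n s) (take n t).
Proof.
have z0 : forall (u : seq T1), zip u ([::] : seq T2) = [::] by case.
elim: s t n => [|x s IH] [|y t] [|n] //=; by rewrite ?z0 ?IH.
Qed.

Lemma rot_zip' (T1 T2 : Type) n (s : seq T1) (t : seq T2) : size s = size t ->
  rot n (zip s t) = zip (rot n s) (rot n t).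
Proof.
move=> hs; rewrite /rot drop_zip' take_zip' zip_cat //.
by rewrite !size_drop hs.
Qed.

Lemma cycle_weight_rot (R : realType) N (a : 'I_N -> R) (M : 'M[R]_N) k c :
  cycle_weight a M (rot k c) = cycle_weight a M c.
Proof.
rewrite /cycle_weight rot_rot -rot_zip' ?size_rot //.
apply: perm_big; by rewrite perm_rot.
Qed.

Fixpoint pw (R : realType) N (a : 'I_N -> R) (M : 'M[R]_N) (p : 'I_N) (s : seq 'I_N) : R :=
  match s with [::] => 1 | q :: s' => M q p / a p * pw R N a M q s' end.
Arguments pw {R N}.

Lemma pw_prod (R : realType) N (a : 'I_N -> R) (M : 'M[R]_N) s p q :
  \prod_(pq <- zip (p :: s) (rcons s q)) (M pq.2 pq.1 / a pq.1) = pw a M p (rcons s q).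
Proof.
elim: s p => [|r s IH] p /=; first by rewrite big_cons big_nil.
by rewrite big_cons IH.
Qed.

Lemma pw_rcons (R : realType) N (a : 'I_N -> R) (M : 'M[R]_N) s p q :
  pw a M p (rcons s q) = pw a M p s * (M q (last p s) / a (last p s)).
Proof.
elim: s p => [|r s IH] p /=; first by rewrite mul1r mulr1.
by rewrite IH mulrA.
Qed.

Lemma pw_ge0 (R : realType) N (a : 'I_N -> R) (M : 'M[R]_N)
  (ha : forall p, 0 < a p) (hM : forall p q, 0 <= M p q) s p : 0 <= pw a M p s.
Proof.
elim: s p => [|r s IH] p /=; first exact: ler01.
apply: mulr_ge0 => //; apply: divr_ge0 => //; exact: ltW.
Qed.

Lemma cycle_ineq (R : realType) N (a : 'I_N -> R) (M : 'M[R]_N) (y : 'I_N -> R) (i : 'I_N) c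
  (ha : forall p, 0 < a p) (hM : forall p q, 0 <= M p q) (hy : forall p, 0 <= y p)
  (hstep : forall p r, (p == i)%:R + M p r / a r * y r <= y p) :
  i \in c -> 1 + cycle_weight a M c * y i <= y i.
Proof.
move=> hi.
case: (rot_to hi) => k rest hrot.
rewrite -(@cycle_weight_rot R N a M k c) hrot /cycle_weight rot1_cons pw_prod pw_rcons.
set l := last i rest.
have L1 : forall s p, pw a M p s * y p <= y (last p s).
  elim=> [|r s IH] p /=; first by rewrite mul1r.
  apply: le_trans (IH r).
  have -> : M r p / a p * pw a M r s * y p = pw a M r s * (M r p / a p * y p) by ring.
  apply: ler_wpM2l; first exact: (@pw_ge0 R N a M ha hM).
  have := hstep r p; have : 0 <= (r == i)%:R :> R by rewrite ler0n.
  move=> h1 h2; lra.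
have h1 := hstep i l; rewrite eqxx in h1.
have h2 := L1 rest i; rewrite -/l in h2.
have w0 : 0 <= M i l / a l by apply: divr_ge0 => //; exact: ltW.
have := ler_wpM2l w0 h2.
move: h1; set P := pw a M i rest; set W := M i l / a l => h1 h3.
have -> : P * W * y i = W * (P * y i) by ring.
move: h1; rewrite /= mulr1n => h1; lra.
Qed.
Definition Lop (R : realType) N (a : 'I_N -> R) (M : 'M[R]_N) (mu : R)
  (y : 'I_N -> R) (p : 'I_N) : R := (mu + a p) * y p - \sum_q M p q * y q.
Arguments Lop {R N}.

Lemma Lsum (R : realType) N (a : 'I_N -> R) (M : 'M[R]_N) (mu : R) y p :
  \sum_q (mu%:M - sysmat a M) p q * y q = Lop a M mu y p.
Proof.
have -> : \sum_q (mu%:M - sysmat a M) p q * y q =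
   \sum_q ((mu + a p) *+ (p == q) * y q - M p q * y q).
  apply: eq_bigr => q _; rewrite /sysmat /Amat !mxE.
  case: (eqVneq p q) => [<-|hpq] /=; first by ring.
  by rewrite !mulr0n; ring.
rewrite sumrB /Lop; congr (_ - _).
rewrite (bigD1 p) //= eqxx mulr1n big1 ?addr0 // => q hq.
by rewrite eq_sym (negbTE hq) mulr0n mul0r.
Qed.

Lemma inv_solve (R : realType) N (a : 'I_N -> R) (M : 'M[R]_N) (mu : R) :
  (mu%:M - sysmat a M) \in unitmx ->
  exists K : 'M[R]_N,
    (forall y p, Lop a M mu (fun q => \sum_r K q r * y r) p = y p) /\
    (forall y p, \sum_r K p r * Lop a M mu y r = y p).
Proof.
set G := mu%:M - sysmat a M => hu.
exists (invmx G); split => y p.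
- rewrite -Lsum.
  have := congr1 (fun A : 'M[R]_(N,1) => A p 0) (mulKVmx hu (\col_r y r)).
  rewrite !mxE => <-; apply: eq_bigr => q _; rewrite !mxE; congr (_ * _).
  by apply: eq_bigr => r _; rewrite !mxE.
- have := congr1 (fun A : 'M[R]_(N,1) => A p 0) (mulKmx hu (\col_r y r)).
  rewrite !mxE => <-; apply: eq_bigr => q _; rewrite !mxE -Lsum; congr (_ * _).
  by apply: eq_bigr => r _; rewrite !mxE.
Qed.

Arguments inv_solve {R N a M mu}.

Lemma minp (R : realType) N (a : 'I_N -> R) (M : 'M[R]_N) (mu : R) (v x : 'I_N -> R) :
  (forall p q, 0 <= M p q) -> (forall p, 0 < v p) -> (forall p, 0 < Lop a M mu v p) ->
  (forall p, 0 <= Lop a M mu x p) -> forall p, 0 <= x p.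
Proof.
move=> hM hv hLv hLx p.
rewrite leNgt; apply/negP => hxp.
case: (@arg_minP _ _ _ p xpredT (fun q => x q / v q) isT) => k _ hk.
set t := x k / v k.
have ht : t < 0.
  apply: (le_lt_trans (hk p isT)); rewrite pmulr_llt0 // invr_gt0; exact: hv.
have hy : forall q, 0 <= x q - t * v q.
  move=> q; have := hk q isT; rewrite -/t ler_pdivlMr ?hv // => h; lra.
have hyk : x k - t * v k = 0 by rewrite /t (mulfVK (lt0r_neq0 (hv k))) subrr.
have e : Lop a M mu (fun q => x q - t * v q) k = Lop a M mu x k - t * Lop a M mu v k.
  rewrite /Lop.
  have -> : \sum_q M k q * (x q - t * v q) = \sum_q M k q * x q - t * \sum_q M k q * v q.
    by rewrite mulr_sumr -sumrB; apply: eq_bigr => q _; ring.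
  ring.
have h1 : Lop a M mu (fun q => x q - t * v q) k <= 0.
  rewrite /Lop hyk mulr0 sub0r oppr_le0; apply: sumr_ge0 => q _.
  exact: mulr_ge0 (hM _ _) (hy q).
have := hLx k; have := hLv k; nra.
Qed.

Arguments minp {R N a M mu v x}.

Lemma exists_small (R : realType) (b1 b2 : R) : 0 < b1 -> 0 < b2 ->
  exists d : R, [/\ 0 < d, d <= b1 & d <= b2].
Proof.
move=> h1 h2; exists (Num.min b1 b2); split.
- by rewrite lt_min h1 h2.
- by rewrite ge_min lexx.
- by rewrite ge_min lexx orbT.
Qed.

Lemma Kbound (R : realType) N (K : 'M[R]_N) (y : 'I_N -> R) (Y : R) (p : 'I_N) :
  (forall r, `|y r| <= Y) ->
  `|\sum_r K p r * y r| <= (\sum_p' \sum_r `|K p' r|) * Y.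
Proof.
move=> hy.
have Y0 : 0 <= Y by apply: le_trans (hy p); exact: normr_ge0.
apply: (le_trans (ler_norm_sum _ _ _)).
apply: (@le_trans _ _ (\sum_r `|K p r| * Y)).
  apply: ler_sum => r _; rewrite normrM; apply: ler_wpM2l => //; exact: normr_ge0.
rewrite -mulr_suml; apply: ler_wpM2r => //.
rewrite [X in _ <= X](bigD1 p) //= lerDl; apply: sumr_ge0 => q _; apply: sumr_ge0 => r _; exact: normr_ge0.
Qed.

Local Open Scope classical_set_scope.

Lemma exists_pos (R : realType) N (a : 'I_N -> R) (M : 'M[R]_N)
  (ha : forall p, 0 < a p) (hM : forall p q, 0 <= M p q)
  (hU : forall mu, 0 <= mu -> (mu%:M - sysmat a M) \in unitmx) :
  exists v : 'I_N -> R, (forall p, 0 < v p) /\ (forall p, 0 < Lop a M 0 v p).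
Proof.
pose S : set R := fun mu => 0 <= mu /\ exists v : 'I_N -> R,
   (forall p, 0 < v p) /\ (forall p, 0 < Lop a M mu v p).
suff : S 0 by case.
have S_ne : S (1 + \sum_p \sum_q M p q).
  have s0 : 0 <= \sum_p \sum_q M p q by apply: sumr_ge0 => p _; apply: sumr_ge0.
  split; first lra.
  exists (fun _ => 1); split => // p; rewrite /Lop /= mulr1.
  have -> : \sum_q M p q * 1 = \sum_q M p q by apply: eq_bigr => q _; rewrite mulr1.
  have : \sum_q M p q <= \sum_p \sum_q M p q.
    rewrite [X in _ <= X](bigD1 p) //= lerDl; apply: sumr_ge0 => q _; apply: sumr_ge0 => r _; exact: hM.
  move=> h1; have h2 := ha p; lra.
have lb0 : lbound S 0 by move=> x [].
have hlb : has_lbound S by exists 0.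
have hinf : has_inf S by split => //; exists (1 + \sum_p \sum_q M p q).
set m := inf S.
have m0 : 0 <= m by apply: lb_le_inf => //; exists (1 + \sum_p \sum_q M p q).
have lbm : lbound S m := ge_inf hlb.
have [vs [vs_pos Lvs]] : exists v : 'I_N -> R, (forall p, 0 < v p) /\ (forall p, Lop a M m v p = 1).
  have [K [K1 K2]] := inv_solve (hU m m0).
  pose vs := fun q => \sum_r K q r * 1.
  have Lvs : forall p, Lop a M m vs p = 1 := fun p => K1 (fun _ => 1) p.
  set C := \sum_p \sum_r `|K p r|.
  have C0 : 0 <= C by apply: sumr_ge0 => p _; apply: sumr_ge0 => r _; exact: normr_ge0.
  have vs_nn : forall p, 0 <= vs p.
    move=> p; rewrite leNgt; apply/negP => hneg.
    set e := - vs p.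
    have he : 0 < e by rewrite /e oppr_gt0.
    have [d [hd hd1 hd2]] := @exists_small R (1 / (2 * (C + 1))) (e / (4 * (C + 1) ^+ 2))
       ltac:(apply: divr_gt0 => //; lra) ltac:(apply: divr_gt0 => //; nra).
    rewrite ler_pdivlMr in hd1; last lra.
    rewrite ler_pdivlMr in hd2; last nra.
    have [mu Smu hmu] := inf_adherent hd hinf.
    have mmu : m <= mu := lbm mu Smu.
    case: Smu => mu0 [w [hw hLw]].
    have [K' [K1' _]] := inv_solve (hU mu mu0).
    pose x := fun q => \sum_r K' q r * 1.
    have Lx : forall q, Lop a M mu x q = 1 := fun q => K1' (fun _ => 1) q.
    have xnn : forall q, 0 <= x q.
      by apply: (minp hM hw hLw) => q; rewrite Lx ler01.
    set d' := mu - m.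
    have d'0 : 0 <= d' by rewrite /d' subr_ge0.
    have d'd : d' <= d by rewrite /d'; lra.
    have Lmx : forall q, Lop a M m x q = 1 - d' * x q.
      move=> q; rewrite -(Lx q) /Lop /d'; ring.
    have xeq : forall q, x q = \sum_r K q r * (1 - d' * x r).
      move=> q; rewrite -(K2 x q); apply: eq_bigr => r _; by rewrite Lmx.
    case: (@arg_maxP _ _ _ p xpredT x isT) => q0 _ hq0.
    set X := x q0.
    have X0 : 0 <= X := xnn q0.
    have bX : X <= C * (1 + d' * X).
      have := @Kbound R N K (fun r => 1 - d' * x r) (1 + d' * X) q0.
      rewrite -xeq -/X ger0_norm //; apply => r.
      have xr := hq0 r isT; have := xnn r.
      rewrite /= -/X in xr.
      move=> xr0.
      have h1 : 0 <= d' * x r by exact: mulr_ge0.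
      have h2 : d' * x r <= d' * X by exact: ler_wpM2l.
      rewrite ler_norml; apply/andP; split; lra.
    have cd1 : C * d' <= 1 / 2.
      have : C * d' <= C * d by apply: ler_wpM2l.
      move: hd1; rewrite mulrDr mulr1 => hd1' h; nra.
    have cdx : C * d' * X <= X / 2.
      by have h := ler_wpM2r X0 cd1; apply: le_trans h _; rewrite mulrC mul1r.
    have X2 : X <= 2 * C by move: bX; rewrite mulrDr mulr1 mulrA => bX; lra.
    have diff : vs p - x p = \sum_r K p r * (d' * x r).
      rewrite /vs (xeq p) -sumrB; apply: eq_bigr => r _; ring.
    have bd : `|vs p - x p| <= C * (d' * X).
      rewrite diff; apply: Kbound => r.
      rewrite ger0_norm; last exact: mulr_ge0.
      exact: ler_wpM2l (hq0 r isT).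
    have t1 : C * (d' * X) <= C * (d' * (2 * C)).
      by apply: ler_wpM2l => //; apply: ler_wpM2l.
    have t2 : C * (d' * (2 * C)) <= e / 2.
      have : d' * (4 * (C + 1) ^+ 2) <= e by apply: le_trans hd2; apply: ler_wpM2r => //; nra.
      rewrite expr2 => h; nra.
    have := ler_normlW (le_trans bd (le_trans t1 t2)).
    rewrite ler_norml in bd.
    have := xnn p; rewrite /e in he t2 *; nra.
  exists vs; split => // p.
  have := Lvs p; rewrite /Lop.
  have : 0 <= \sum_q M p q * vs q by apply: sumr_ge0 => q _; exact: mulr_ge0.
  have := ha p; have := vs_nn p; nra.
have Sm : S m by split => //; exists vs; split => // p; rewrite Lvs ltr01.
suff -> : 0 = m by [].
apply/eqP; rewrite eq_le m0 andTb leNgt; apply/negP => mpos.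
set V := \sum_p vs p.
have V0 : 0 <= V by apply: sumr_ge0 => p _; exact: ltW.
set d := m / (1 + m * V).
have hmV : 0 < 1 + m * V by nra.
have hd : 0 < d by apply: divr_gt0.
have hdm : d * (1 + m * V) = m by rewrite /d mulfVK // gt_eqF.
have Sd : S (m - d).
  split; first nra.
  exists vs; split => // p.
  have vV : vs p <= V.
    rewrite /V (bigD1 p) //= lerDl; apply: sumr_ge0 => q _; exact: ltW.
  have e1 : Lop a M (m - d) vs p = 1 - d * vs p by rewrite -(Lvs p) /Lop; ring.
  rewrite e1; have := vs_pos p; nra.
have := lbm _ Sd; lra.
Qed.
Local Close Scope classical_set_scope.

Lemma node_facts (R : realType) (N : nat) (a : 'I_N -> R) (M : 'M[R]_N) (gamma : R) :
  (forall i, 0 < a i) ->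
  (forall p q, 0 <= M p q) ->
  hurwitz (sysmat a M) ->
  0 < gamma ->
  gamma_robust a M gamma ->
  forall c : seq 'I_N, forall i, i \in c ->
    cycle_weight a M c < 1 /\ (1 - cycle_weight a M c)^-1 <= a i * gamma.
Proof.
move=> ha hM hH hg hrob c i hi.
have hU : forall mu : R, 0 <= mu -> (mu%:M - sysmat a M) \in unitmx.
  by move=> mu h; exact: (@unit_Gm R N a M mu h hH).
have [v [hv hLv]] := @exists_pos R N a M ha hM hU.
have [K [K1 _]] := inv_solve (hU 0 (lexx 0)).
pose xs := fun q => \sum_r K q r * (r == i)%:R.
have Lxs : forall p, Lop a M 0 xs p = (p == i)%:R := K1 _.
have xnn : forall p, 0 <= xs p.
  by apply: (minp hM hv hLv) => p; rewrite Lxs ler0n.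
have hsum : forall j, `|\sum_q sysmat a M j q * xs q| <= 1.
  move=> j.
  have -> : \sum_q sysmat a M j q * xs q = - Lop a M 0 xs j.
    rewrite -Lsum -sumrN; apply: eq_bigr => q _; rewrite !mxE mul0rn sub0r mulNr opprK.
    done.
  rewrite Lxs normrN ger0_norm ?ler0n //; by case: (j == i).
have xb := @static_bound R N a M gamma hg hrob xs 1 hsum i.
rewrite mulr1 ger0_norm // in xb.
pose y := fun p => a p * xs p.
have hy : forall p, 0 <= y p by move=> p; apply: mulr_ge0; [exact: ltW | exact: xnn].
have hstep : forall p r, (p == i)%:R + M p r / a r * y r <= y p.
  move=> p r.
  have e1 : M p r / a r * y r = M p r * xs r.
    by rewrite /y mulrA mulfVK // lt0r_neq0.
  rewrite e1.
  have := Lxs p; rewrite /Lop add0r => e2.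
  have : M p r * xs r <= \sum_q M p q * xs q.
    rewrite (bigD1 r) //= lerDl; apply: sumr_ge0 => q _; exact: mulr_ge0.
  rewrite /y; lra.
have cyc := @cycle_ineq R N a M y i c ha hM hy hstep hi.
have yb : y i <= a i * gamma by rewrite /y; apply: ler_wpM2l => //; exact: ltW.
set w := cycle_weight a M c.
rewrite -/w in cyc.
have yi0 := hy i.
have w1 : w < 1 by nra.
split => //.
rewrite -[(1 - w)^-1]mul1r ler_pdivrMr; last lra.
nra.
Qed.

Theorem mainTheorem3 (R : realType) (N : nat) (a : 'I_N -> R) (M : 'M[R]_N)
    (gamma : R) :
  (forall i, 0 < a i) ->
  (forall i, M i i = 0) ->
  (forall i j, i != j -> 0 <= M i j) ->
  hurwitz (sysmat a M) ->
  0 < gamma ->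
  gamma_robust a M gamma ->
  forall c : seq 'I_N, is_cycle M c ->
    cycle_weight a M c < 1 /\
    (forall i, i \in c -> (1 - cycle_weight a M c)^-1 <= a i * gamma).
Proof.
move=> ha hdiag hoff hH hg hrob c hc.
have hM : forall p q, 0 <= M p q.
  by move=> p q; case: (eqVneq p q) => [->|h]; [rewrite hdiag | exact: hoff].
have NF := @node_facts R N a M gamma ha hM hH hg hrob c.
split; last by move=> i hi; case: (NF i hi).
case/and3P: hc; case: c NF => [|i0 c'] NF //= _ _ _.
by case: (NF i0 (mem_head _ _)).
Qed.
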